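(* Let $p$ be a random partition and let $\mathrm{Sh}^p$ be its $p$-Shapley value, $$\mathrm{Sh}^p_i(w)=\sum_{(T,\tau)\in\mathcal{E}(N\setminus\{i\})}\Big(p_N(\{T\cup\{i\}\}\cup\tau)\,w(T\cup\{i\},\tau)-\frac{t}{n-t}\sum_{B\in\tau\cup\{\emptyset\}}p_N(\{T\}\cup\tau_{+i\leadsto B})\,w(T,\tau_{+i\leadsto B})\Big)$$ for $N\subseteq\mathbf{U}$, $w\in\mathbb{W}(N)$, $i\in N$. Then $\mathrm{Sh}^p$ satisfies the null player property if and only if $p=p^\star$, i.e., if and only if $\mathrm{Sh}^p=\mathrm{MPW}$.
   Context: $\mathbf{U}$ is a finite set of players; cardinalities of $N,S,T,B$ are $n,s,t,b$. $\Pi(N)$ is the set of partitions of $N$ ($\Pi(\emptyset)=\{\emptyset\}$). A random partition is $p=(p_N)_{N\subseteq\mathbf{U}}$ with $p_N$ a probability distribution on $\Pi(N)$; $p^\star$ is the Ewens distribution $p^\star_N(\pi)=\frac{\prod_{B\in\pi}(b-1)!}{n!}$. $\pi_{+i\leadsto B}=(\pi\setminus\{B\})\cup\{B\cup\{i\}\}$ for $B\in\pi$, $\pi_{+i\leadsto\emptyset}=\pi\cup\{\{i\}\}$. Embedded coalitions $\mathcal{E}(N)=\{(S,\pi):S\subseteq N,\pi\in\Pi(N\setminus S)\}$; a TUX game on $N$ is $w:\mathcal{E}(N)\to\mathbb{R}$ with $w(\emptyset,\pi)=0$; $\mathbb{W}(N)$ their set. Player $i$ is a null player in $w\in\mathbb{W}(N)$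 if $w(S\cup\{i\},\pi)=w(S,\pi_{+i\leadsto B})$ for all $(S,\pi)\in\mathcal{E}(N\setminus\{i\})$ and $B\in\pi\cup\{\emptyset\}$. A solution $\varphi$ (assigning $\varphi(w)\in\mathbb{R}^N$ to every $w\in\mathbb{W}(N)$, $N\subseteq\mathbf{U}$) satisfies the null player property if $\varphi_i(w)=0$ whenever $i$ is a null player in $w$. The Shapley value of a TU game $v$ is $\mathrm{Sh}_i(v)=\sum_{S\subseteq N\setminus\{i\}}\frac{s!(n-s-1)!}{n!}(v(S\cup\{i\})-v(S))$; the MPW solution is $\mathrm{MPW}(w)=\mathrm{Sh}(\bar v^\star_w)$ with $\bar v^\star_w(S)=\sum_{\pi\in\Pi(N\setminus S)}p^\star_{N\setminus S}(\pi)w(S,\pi)$. *)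

(* Defs.v *)
From HB Require Import structures.
From mathcomp Require Import all_boot all_order all_algebra.
Set Implicit Arguments. Unset Strict Implicit. Unset Printing Implicit Defensive.
Import Order.TTheory GRing.Theory Num.Theory.
Local Open Scope ring_scope.

Section Defs.
Variables (R : realFieldType) (U : finType).

(* Pi(N): the set of partitions of N (mathcomp's [partition], blocks nonempty);
   Pi(set0) = [set set0]. *)
Definition Pi (N : {set U}) : {set {set {set U}}} :=
  [set P : {set {set U}} | partition P N].

Definition is_random_partition (p : {set U} -> {set {set U}} -> R) : Prop :=
  forall N : {set U},
    (forall P, P \in Pi N -> 0 <= p N P) /\ \sum_(P in Pi N) p N P = 1.

Definition ewens (N : {set U}) (P : {set {set U}}) : R :=
  (\prod_(B in P) ((#|B|.-1)`!)%:R) / ((#|N|)`!)%:R.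

(* pi_{+i ~> B}; B = set0 means adding the singleton block {i}. *)
Definition plus_to (P : {set {set U}}) (i : U) (B : {set U}) : {set {set U}} :=
  if B == set0 then P :|: [set [set i]]
  else (P :\ B) :|: [set B :|: [set i]].

(* TUX games are functions on embedded coalitions (S, pi), S \subset N,
   pi \in Pi (N :\: S); only those values matter. A game on N must vanish on
   (set0, pi). *)
Definition is_game (N : {set U}) (w : {set U} -> {set {set U}} -> R) : Prop :=
  forall P, P \in Pi N -> w set0 P = 0.

Definition null_player (N : {set U}) (w : {set U} -> {set {set U}} -> R)
    (i : U) : Prop :=
  forall (S : {set U}) (P : {set {set U}}),
    S \subset N :\ i -> P \in Pi ((N :\ i) :\: S) ->
    forall B, B \in P :|: [set set0] ->
      w (S :|: [set i]) P = w S (plus_to P i B).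

Definition solution := {set U} -> ({set U} -> {set {set U}} -> R) -> U -> R.

Definition null_player_property (phi : solution) : Prop :=
  forall (N : {set U}) (w : {set U} -> {set {set U}} -> R) (i : U),
    is_game N w -> i \in N -> null_player N w i -> phi N w i = 0.

Definition pShapley (p : {set U} -> {set {set U}} -> R) : solution :=
  fun N w i =>
    \sum_(T : {set U} | T \subset N :\ i)
      \sum_(tau in Pi ((N :\ i) :\: T))
        (p N ((T :|: [set i]) |: tau) * w (T :|: [set i]) tau
         - (#|T|%:R / (#|N| - #|T|)%:R) *
           \sum_(B in tau :|: [set set0])
              p N (T |: plus_to tau i B) * w T (plus_to tau i B)).

Definition Shapley (N : {set U}) (v : {set U} -> R) (i : U) : R :=
  \sum_(S : {set U} | S \subset N :\ i)
    (((#|S|)`! * (#|N| - #|S| - 1)`!)%:R / ((#|N|)`!)%:R)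
      * (v (S :|: [set i]) - v S).

Definition MPW : solution :=
  fun N w i =>
    Shapley N (fun S => \sum_(P in Pi (N :\: S)) ewens (N :\: S) P * w S P) i.

End Defs.

(* Main.v *)
Require Import Defs.
From HB Require Import structures.
From mathcomp Require Import all_boot all_order all_algebra.
From mathcomp Require Import zify ring lra.
Import Order.TTheory GRing.Theory Num.Theory.
Set Implicit Arguments. Unset Strict Implicit. Unset Printing Implicit Defensive.

Local Open Scope ring_scope.
Section Sets.
Variable U : finType.
Implicit Types (M N T B C X : {set U}) (P Q : {set {set U}}).

Definition unplus P (i : U) : {set {set U}} :=
  let C := pblock P i in
  if C :\ i == set0 then P :\ C else (P :\ C) :|: [set C :\ i].

Lemma inPi P M : (P \in Pi M) = partition P M.
Proof. by rewrite inE. Qed.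

Lemma Pi_notin i M P C : P \in Pi (M :\ i) -> C \in P -> i \notin C.
Proof.
rewrite inPi => hP hC; have /subsetP s := partitionS hP hC.
by apply/negP => /s; rewrite !inE eqxx.
Qed.

Lemma Pi_addblock X M P : X != set0 -> X \subset M -> P \in Pi (M :\: X) ->
  (X |: P \in Pi M) /\ X \notin P.
Proof.
move=> X0 XM; rewrite !inPi => hP; split.
  have := partitionU1 hP X0.
  have -> : X :|: (M :\: X) = M.
    apply/setP=> x; rewrite !inE; case: (boolP (x \in X)) => //= /(subsetP XM) ->.
    by [].
  apply; rewrite -setI_eq0; apply/eqP/setP => x; rewrite !inE.
  by case: (x \in X); rewrite ?andbF.
apply/negP => XP; have /subsetP s := partitionS hP XP.
case/set0Pn: X0 => x xX; have := s x xX; by rewrite inE xX.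
Qed.

Lemma Pi_plus i M P B : i \in M -> P \in Pi (M :\ i) ->
  B \in P :|: [set set0] -> plus_to P i B \in Pi M.
Proof.
move=> iM hP; rewrite /plus_to; case: eqP => [-> _|/eqP B0].
  rewrite setUC; apply: (Pi_addblock _ _ hP).1.
    by apply/set0Pn; exists i; rewrite inE.
  by rewrite sub1set.
rewrite !inE (negbTE B0) orbF => BP.

rewrite inPi in hP; have {}hD := partitionD1 hP BP.
rewrite setUC -inPi; apply: (proj1 (@Pi_addblock (B :|: [set i]) M (P :\ B) _ _ _)).
- by apply/set0Pn; exists i; rewrite !inE eqxx orbT.
- have /subsetP s := partitionS hP BP.
  apply/subsetP => x; rewrite !inE => /orP[/s|/eqP->//]; rewrite !inE.
  by case/andP.
- rewrite inPi; have -> : M :\: (B :|: [set i]) = M :\ i :\: B; last by [].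
  by apply/setP => x; rewrite !inE negb_or; case: (x \in B); case: (x == i).
Qed.

Lemma mem_plus P i B : B \in P :|: [set set0] -> B :|: [set i] \in plus_to P i B.
Proof. by rewrite /plus_to; case: eqP => [->|_] _; rewrite !inE ?set0U eqxx ?orbT. Qed.

Lemma pblock_plus i M P B : i \in M -> P \in Pi (M :\ i) ->
  B \in P :|: [set set0] -> pblock (plus_to P i B) i = B :|: [set i].
Proof.
move=> iM hP hB; apply: def_pblock.
- by have := Pi_plus iM hP hB; rewrite inPi => /partition_trivIset.
- exact: mem_plus.
- by rewrite !inE eqxx orbT.
Qed.

Lemma notin_B i M P B : P \in Pi (M :\ i) -> B \in P :|: [set set0] -> i \notin B.
Proof.
move=> hP; rewrite !inE => /orP[BP|/eqP->]; last by rewrite inE.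
exact: Pi_notin hP BP.
Qed.

Lemma setU1D i B : i \notin B -> (B :|: [set i]) :\ i = B.
Proof.
move=> iB; apply/setP=> x; rewrite !inE; case: (eqVneq x i) => [->|] /=.
  by rewrite (negbTE iB).
by rewrite orbF.
Qed.

Lemma unplus_plus i M P B : i \in M -> P \in Pi (M :\ i) ->
  B \in P :|: [set set0] -> unplus (plus_to P i B) i = P.
Proof.
move=> iM hP hB; rewrite /unplus (pblock_plus iM hP hB).
have iB := notin_B hP hB.
rewrite setU1D //.
case: (eqVneq B set0) => [B0|B0].
  rewrite B0 /plus_to !eqxx set0U setUC setU1K //.
  by apply/negP => /(Pi_notin hP); rewrite inE eqxx.
have BP : B \in P by move: hB; rewrite !inE (negbTE B0) orbF.
rewrite /plus_to (negbTE B0) [_ :|: [set _ :|: _]]setUC setU1K.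
  by rewrite setUC setD1K.
rewrite !inE negb_and; apply/orP; right.
by apply/negP => /(Pi_notin hP); rewrite !inE eqxx orbT.
Qed.

Lemma unplusP i M Q : i \in M -> Q \in Pi M ->
  [/\ unplus Q i \in Pi (M :\ i), pblock Q i :\ i \in unplus Q i :|: [set set0]
    & plus_to (unplus Q i) i (pblock Q i :\ i) = Q].
Proof.
move=> iM; rewrite inPi => hQ.
have tQ := partition_trivIset hQ.
have iC : i \in pblock Q i by rewrite mem_pblock (cover_partition hQ).
have CQ : pblock Q i \in Q by rewrite pblock_mem // (cover_partition hQ).
have CM := partitionS hQ CQ.
rewrite /unplus.
move: iC CQ CM; set C := pblock Q i => iC CQ CM.
have hD := partitionD1 hQ CQ.
case: (eqVneq (C :\ i) set0) => [C0|C0].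
  have CE : C = [set i].
    apply/setP => x; rewrite inE; apply/idP/eqP => [xC|->//]; apply/eqP.
    apply: contraT => xi; have : x \in C :\ i by rewrite !inE xi.
    by rewrite C0 inE.
  split.
  - by rewrite inPi -CE.
  - by rewrite C0 !inE eqxx orbT.
  - by rewrite C0 /plus_to eqxx -CE setUC setD1K.
have BnQ : C :\ i \notin Q :\ C.
  apply/negP; rewrite !inE => /andP[BC BQ].
  case/set0Pn: C0 => x xB.
  have e1 := def_pblock tQ BQ xB.
  have e2 : pblock Q x = C by apply: def_pblock tQ CQ _; move: xB; rewrite !inE => /andP[].
  by move: BC; rewrite -e1 e2 eqxx.
split.
- rewrite setUC inPi.
  have := partitionU1 hD C0.
  have -> : C :\ i :|: (M :\: C) = M :\ i.
    apply/setP => x; rewrite !inE; case: (eqVneq x i) => [->|] /=.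
      by rewrite iC.
    by case xC: (x \in C) => //=; rewrite (subsetP CM _ xC).
  apply; rewrite -setI_eq0; apply/eqP/setP => x; rewrite !inE.
  by case: (x \in C); rewrite ?andbF.
- by rewrite !inE eqxx orbT.
- rewrite /plus_to (negbTE C0) [_ :|: [set C :\ i]]setUC setU1K //.
  by rewrite setUC [_ :|: [set i]]setUC setD1K // setD1K.
Qed.

Lemma reindex_Pi (V : nmodType) i M (f : {set {set U}} -> V) : i \in M ->
  \sum_(Q in Pi M) f Q =
  \sum_(P in Pi (M :\ i)) \sum_(B in P :|: [set set0]) f (plus_to P i B).
Proof.
move=> iM.
rewrite [RHS]pair_big_dep /=.
rewrite [RHS](partition_big (fun x : {set {set U}} * {set U} => plus_to x.1 i x.2)
   (fun Q => Q \in Pi M)) /=; last first.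
  by move=> [P B] /andP[hP hB]; exact: Pi_plus iM hP hB.
apply: eq_bigr => Q hQ.
have [h1 h2 h3] := unplusP iM hQ.
rewrite (big_pred1 (unplus Q i, pblock Q i :\ i)) /= ?h3 //.
move=> [P B] /=; apply/andP/eqP => [[/andP[hP hB] /eqP e]|[-> ->]].
  by rewrite -e (unplus_plus iM hP hB) (pblock_plus iM hP hB) setU1D // (notin_B hP hB).
by rewrite h1 h2 h3 eqxx.
Qed.

End Sets.

Section RR.
Variables (R : realFieldType) (U : finType).
Implicit Types (M N T B C X : {set U}) (P Q : {set {set U}}).

Definition fE X : R := ((#|X|.-1)`!)%:R.
Definition prodE P : R := \prod_(B in P) fE B.
Definition cB B : R := if B == set0 then 1 else #|B|%:R.

Lemma ewensE N P : ewens R N P = prodE P / (#|N|`!)%:R.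
Proof. by []. Qed.

Lemma fact_neq0 n : ((n`!)%:R : R) != 0.
Proof. by rewrite pnatr_eq0 -lt0n fact_gt0. Qed.

Lemma prodE_add X P : X \notin P -> prodE (X |: P) = fE X * prodE P.
Proof. by move=> XP; rewrite /prodE big_setU1. Qed.

Lemma prodE_plus i M P B : P \in Pi (M :\ i) -> B \in P :|: [set set0] ->
  prodE (plus_to P i B) = cB B * prodE P.
Proof.
move=> hP hB; rewrite /plus_to /cB; case: eqP => [B0|/eqP B0].
  rewrite setUC prodE_add; last by apply/negP => /(Pi_notin hP); rewrite inE eqxx.
  by rewrite /fE cards1 /= mul1r.
have BP : B \in P by move: hB; rewrite !inE (negbTE B0) orbF.
have iB := Pi_notin hP BP.
rewrite setUC prodE_add; last first.
  by rewrite !inE negb_and; apply/orP; right; apply/negP => /(Pi_notin hP); rewrite !inE eqxx orbT.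
rewrite /prodE (big_setD1 B BP) /= mulrA; congr (_ * _).
rewrite /fE setUC cardsU1 iB /=.
have : (0 < #|B|)%N by rewrite card_gt0.
case: #|B| => // k _ /=.
by rewrite factS natrM mulrC.
Qed.

Lemma sumcB M P : P \in Pi M -> \sum_(B in P :|: [set set0]) cB B = (#|M|.+1)%:R.
Proof.
move=> hP; have P0 : set0 \notin P by rewrite inPi in hP; rewrite (partition0 hP).
rewrite setUC big_setU1 //= /cB eqxx.
rewrite inPi in hP; rewrite (card_partition hP) -nat1r natr_sum; congr (_ + _).
apply: eq_bigr => B BP; case: eqP => // B0; by rewrite -B0 BP in P0.
Qed.

Lemma Pi0 : Pi (set0 : {set U}) = [set set0].
Proof. by apply/setP => P; rewrite inPi partition_set0 inE. Qed.

Lemma sum_ewens N : \sum_(P in Pi N) ewens R N P = 1.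
Proof.
have [n] := ubnP #|N|; elim: n N => // n IH N hN.
case: (set_0Vmem N) => [->|[i iN]].
  by rewrite Pi0 big_set1 ewensE /prodE big_set0 cards0 /= divr1.
rewrite (reindex_Pi _ iN).
have cN : #|N| = (#|N :\ i|).+1 by rewrite (cardsD1 i N) iN.
rewrite -[RHS](IH (N :\ i)); last by rewrite cN in hN.
apply: eq_bigr => P hP.
under eq_bigr => B hB do rewrite ewensE (prodE_plus hP hB).
rewrite -mulr_suml -mulr_suml (sumcB hP) !ewensE cN factS natrM.
by field; rewrite fact_neq0 nat1r pnatr_eq0.
Qed.

Lemma setDD N i T : (N :\ i) :\: T = (N :\: T) :\ i.
Proof. by rewrite !setDDl setUC. Qed.

Lemma setDU N i T : N :\: (T :|: [set i]) = (N :\ i) :\: T.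
Proof. by rewrite setDDl setUC. Qed.

Lemma card_split N i T : i \in N -> T \subset N :\ i ->
  #|N| = (#|T| + #|(N :\: T) :\ i|).+1.
Proof.
move=> iN TN.
have TN' : T \subset N by apply: subset_trans TN (subD1set _ _).
have iT : i \notin T by apply/negP => /(subsetP TN); rewrite !inE eqxx.
have iNT : i \in N :\: T by rewrite inE iT iN.
have h1 := cardsD1 i (N :\: T); rewrite iNT in h1.
have h2 := cardsD N T; rewrite (setIidPr TN') in h2.
have h3 := subset_leq_card TN'.
lia.
Qed.

Lemma ewens_cond N i T tau : i \in N -> T \subset N :\ i -> T != set0 ->
  tau \in Pi ((N :\ i) :\: T) ->
  ewens R N ((T :|: [set i]) |: tau) =
  #|T|%:R / (#|N| - #|T|)%:R *
    \sum_(B in tau :|: [set set0]) ewens R N (T |: plus_to tau i B).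
Proof.
move=> iN TN T0 htau.
have TN' : T \subset N by apply: subset_trans TN (subD1set _ _).
have iT : i \notin T by apply/negP => /(subsetP TN); rewrite !inE eqxx.
have iNT : i \in N :\: T by rewrite inE iT iN.
have htau' : tau \in Pi ((N :\: T) :\ i) by rewrite -setDD.
have X0 : T :|: [set i] != set0 by apply/set0Pn; exists i; rewrite !inE eqxx orbT.
have XN : T :|: [set i] \subset N.
  by apply/subsetP => x; rewrite !inE => /orP[/(subsetP TN')|/eqP->].
have htau2 : tau \in Pi (N :\: (T :|: [set i])) by rewrite setDU.
have [_ nT] := Pi_addblock X0 XN htau2.
rewrite ewensE prodE_add //.
under eq_bigr => B hB.
  have [_ nTB] := Pi_addblock T0 TN' (Pi_plus iNT htau' hB).
  rewrite ewensE prodE_add // (prodE_plus htau' hB).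
over.
rewrite (_ : \sum_(B in tau :|: [set set0]) _ =
   (\sum_(B in tau :|: [set set0]) cB B) * (fE T * prodE tau / #|N|`!%:R)); last first.
  by rewrite mulr_suml; apply: eq_bigr => B _ /=; ring.
rewrite (sumcB htau').
have cN := card_split iN TN.
rewrite /fE setUC cardsU1 iT /= cN.
move: T0; rewrite -card_gt0; case: #|T| => // t _ /=.
have -> : ((t.+1 + #|N :\: T :\ i|).+1 - t.+1 = #|N :\: T :\ i|.+1)%N by lia.
rewrite add0n [(t.+1)`!]factS natrM.
by field; rewrite fact_neq0 nat1r pnatr_eq0.
Qed.


Lemma memPi1 N i T tau : i \in N -> T \subset N :\ i ->
  tau \in Pi ((N :\ i) :\: T) -> (T :|: [set i]) |: tau \in Pi N /\ (T :|: [set i]) \notin tau.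
Proof.
move=> iN TN htau.
have TN' : T \subset N by apply: subset_trans TN (subD1set _ _).
have X0 : T :|: [set i] != set0 by apply/set0Pn; exists i; rewrite !inE eqxx orbT.
have XN : T :|: [set i] \subset N.
  by apply/subsetP => x; rewrite !inE => /orP[/(subsetP TN')|/eqP->].
have htau2 : tau \in Pi (N :\: (T :|: [set i])) by rewrite setDU.
exact: Pi_addblock X0 XN htau2.
Qed.

Lemma memPi2 N i T tau B : i \in N -> T \subset N :\ i -> T != set0 ->
  tau \in Pi ((N :\ i) :\: T) -> B \in tau :|: [set set0] ->
  T |: plus_to tau i B \in Pi N /\ T \notin plus_to tau i B.
Proof.
move=> iN TN T0 htau hB.
have TN' : T \subset N by apply: subset_trans TN (subD1set _ _).
have iT : i \notin T by apply/negP => /(subsetP TN); rewrite !inE eqxx.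
have iNT : i \in N :\: T by rewrite inE iT iN.
have htau' : tau \in Pi ((N :\: T) :\ i) by rewrite -setDD.
exact: Pi_addblock T0 TN' (Pi_plus iNT htau' hB).
Qed.

Lemma pShapley_ext (p q : {set U} -> {set {set U}} -> R) N w i :
  i \in N -> (forall P, P \in Pi N -> p N P = q N P) ->
  pShapley p N w i = pShapley q N w i.
Proof.
move=> iN hpq; apply: eq_bigr => T TN; apply: eq_bigr => tau htau.
rewrite hpq; last by case: (memPi1 iN TN htau).
case: (eqVneq T set0) => [->|T0]; first by rewrite cards0 !mul0r.
congr (_ - _ * _); apply: eq_bigr => B hB.
by rewrite hpq //; case: (memPi2 iN TN T0 htau hB).
Qed.

Lemma npp_of_ewens (p : {set U} -> {set {set U}} -> R) :
  (forall N P, P \in Pi N -> p N P = ewens R N P) ->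
  null_player_property (pShapley p).
Proof.
move=> hpE N w i gw iN nw; rewrite (pShapley_ext w iN (hpE N)).
apply: big1 => T TN; apply: big1 => tau htau.
have e : forall B, B \in tau :|: [set set0] ->
    w T (plus_to tau i B) = w (T :|: [set i]) tau.
  by move=> B hB; rewrite (nw T tau TN htau B hB).
under eq_bigr => B hB do rewrite e //.
rewrite -mulr_suml.
case: (eqVneq T set0) => [T0|T0].
  have htau' : tau \in Pi (N :\ i) by rewrite -[N :\ i]setD0 -T0.
  rewrite T0 (nw set0 tau (sub0set _) _ set0); last by rewrite !inE eqxx orbT.
    by rewrite gw ?(Pi_plus iN htau') ?inE ?eqxx ?orbT // !mulr0 subrr.
  by rewrite -T0.
by rewrite (ewens_cond iN TN T0 htau) mulrA subrr.
Qed.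


Lemma shapley_mpw N w i : is_game N w -> i \in N ->
  pShapley (@ewens R U) N w i = MPW N w i.
Proof.
move=> gw iN; rewrite /MPW /Shapley /pShapley; apply: eq_bigr => T TN.
have TN' : T \subset N by apply: subset_trans TN (subD1set _ _).
have iT : i \notin T by apply/negP => /(subsetP TN); rewrite !inE eqxx.
have iNT : i \in N :\: T by rewrite inE iT iN.
have cN := card_split iN TN.
have cNT : #|N :\: T| = (#|N :\: T :\ i|).+1 by rewrite (cardsD1 i (N :\: T)) iNT.
rewrite mulrBr sumrB; congr (_ - _).
  rewrite setDU mulr_sumr; apply: eq_bigr => tau htau; rewrite mulrA; congr (_ * _).
  have [_ nT] := memPi1 iN TN htau.
  rewrite !ewensE prodE_add // /fE setUC cardsU1 iT /= add0n setDD cN.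
  have -> : ((#|T| + #|N :\: T :\ i|).+1 - #|T| - 1 = #|N :\: T :\ i|)%N by lia.
  by field; rewrite !fact_neq0.
case: (eqVneq T set0) => [T0|T0].
  rewrite T0 cards0 big1 => [|tau _]; last by rewrite !mul0r.
  rewrite setD0 big1 ?mulr0 // => P hP; by rewrite gw // mulr0.
rewrite (reindex_Pi _ iNT) -setDD mulr_sumr; apply: eq_bigr => tau htau.
rewrite mulr_sumr mulr_sumr; apply: eq_bigr => B hB; rewrite !mulrA; congr (_ * _).
have [_ nT] := memPi2 iN TN T0 htau hB.
rewrite -/(prodE (T |: plus_to tau i B)) -/(prodE (plus_to tau i B)) prodE_add // /fE cNT.
have e1 : (#|N| - #|T| = #|N :\: T :\ i|.+1)%N by lia.
have e2 : (#|N| - #|T| - 1 = #|N :\: T :\ i|)%N by lia.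
rewrite e2 e1.
move: (fact_neq0 #|N|); generalize (#|N|`!%:R : R) => F hF.
move: T0; rewrite -card_gt0; case: #|T| => // t _.
rewrite [(t.+1)`!]factS [(#|N :\: T :\ i|.+1)`!]factS !natrM /=.
by field; rewrite !fact_neq0 nat1r pnatr_eq0.
Qed.


Definition condC (p : {set U} -> {set {set U}} -> R) :=
  forall N i T tau, i \in N -> T \subset N :\ i -> T != set0 ->
  tau \in Pi ((N :\ i) :\: T) ->
  p N ((T :|: [set i]) |: tau) =
  #|T|%:R / (#|N| - #|T|)%:R *
    \sum_(B in tau :|: [set set0]) p N (T |: plus_to tau i B).

Lemma npp_condC p : null_player_property (pShapley p) -> condC p.
Proof.
move=> npp N i T0 tau0 iN TN T0n htau0.
pose w := fun (S : {set U}) (P : {set {set U}}) => if i \in S then (((S :\ i == T0) && (P == tau0)) : nat)%:R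
   else (((S == T0) && (unplus P i == tau0)) : nat)%:R : R.
have iS : forall S : {set U}, S \subset N :\ i -> i \notin S.
  by move=> S SN; apply/negP => /(subsetP SN); rewrite !inE eqxx.
have wE1 : forall T tau, T \subset N :\ i ->
    w (T :|: [set i]) tau = (((T == T0) && (tau == tau0)) : nat)%:R.
  by move=> T tau TN'; rewrite /w !inE eqxx orbT setU1D ?iS.
have wE2 : forall T tau B, T \subset N :\ i -> tau \in Pi ((N :\ i) :\: T) ->
    B \in tau :|: [set set0] ->
    w T (plus_to tau i B) = (((T == T0) && (tau == tau0)) : nat)%:R.
  move=> T tau B TN' htau hB; rewrite /w (negbTE (iS _ TN')).
  have iNT : i \in N :\: T by rewrite inE iS ?iN.
  have htau' : tau \in Pi ((N :\: T) :\ i) by rewrite -setDD.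
  by rewrite (unplus_plus iNT htau' hB).
have gw : is_game N w by move=> P _; rewrite /w in_set0 eq_sym (negbTE T0n).
have nw : null_player N w i.
  by move=> S P SN hP B hB; rewrite wE1 // wE2.
have H := npp N w i gw iN nw.
apply/eqP; rewrite -subr_eq0; apply/eqP; rewrite -[RHS]H /pShapley.
rewrite [RHS](bigD1 T0) //= [X in _ = _ + X]big1 ?addr0 => [|T /andP[TN' TT0]]; last first.
  apply: big1 => tau htau; rewrite wE1 // (negbTE TT0) /= mulr0 big1 ?mulr0 ?subrr //.
  by move=> B hB; rewrite wE2 // (negbTE TT0) mulr0.
rewrite [RHS](bigD1 tau0) //= [X in _ = _ + X]big1 ?addr0 => [|tau /andP[htau tt0]]; last first.
  rewrite wE1 // eqxx (negbTE tt0) /= mulr0 big1 ?mulr0 ?subrr //.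
  by move=> B hB; rewrite wE2 // eqxx (negbTE tt0) mulr0.
rewrite wE1 // !eqxx mulr1; congr (_ - _ * _); apply: eq_bigr => B hB.
by rewrite wE2 // !eqxx mulr1.
Qed.


Lemma plus_split (s : {set {set U}}) i T B : T \in s -> T != set0 ->
  B \in (s :\ T) :|: [set set0] -> T |: plus_to (s :\ T) i B = plus_to s i B.
Proof.
move=> Ts T0; rewrite /plus_to; case: eqP => [B0 _|/eqP B0].
  by rewrite setUA setD1K.
rewrite !inE (negbTE B0) orbF => /andP[BT Bs].
rewrite setUA; congr (_ :|: _).
apply/setP => X; rewrite !inE; case: (eqVneq X T) => [->|XT] /=.
  by rewrite eq_sym BT Ts.
by [].
Qed.

Lemma card_le_Pi N Q : Q \in Pi N -> (#|Q| <= #|N|)%N.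
Proof.
rewrite inPi => hQ; rewrite (card_partition hQ) -sum1_card; apply: leq_sum => B BQ.
by rewrite card_gt0 (partition_neq0 hQ BQ).
Qed.

Lemma step1 p N i s B : condC p -> i \in N -> s \in Pi (N :\ i) -> B \in s ->
  p N (plus_to s i B) = #|B|%:R * p N (plus_to s i set0).
Proof.
move=> hC iN hs Bs.
pose x := fun B0 => p N (plus_to s i B0).
pose X := \sum_(B in s :|: [set set0]) x B.
have hs' := hs; rewrite inPi in hs'.
have s0 : set0 \notin s by rewrite (partition0 hs').
have nN : (0 < #|N|)%N by rewrite card_gt0; apply/set0Pn; exists i.
have key : forall T, T \in s -> x T * #|N|%:R = #|T|%:R * X.
  move=> T Ts.
  have T0 : T != set0 by apply: contraNneq s0 => <-.
  have TN : T \subset N :\ i by apply: partitionS hs' Ts.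
  have htau : s :\ T \in Pi ((N :\ i) :\: T) by rewrite inPi; apply: partitionD1.
  have := hC N i T (s :\ T) iN TN T0 htau.
  have -> : (T :|: [set i]) |: (s :\ T) = plus_to s i T.
    by rewrite /plus_to (negbTE T0) setUC.
  rewrite (eq_bigr (fun B0 => x B0)); last by move=> B0 hB; rewrite plus_split.
  have -> : \sum_(B in s :\ T :|: [set set0]) x B = X - x T.
    rewrite /X [in RHS](bigD1 T) /=; last by rewrite !inE Ts.
    rewrite addrC addrK; apply: eq_bigl => B0; rewrite !inE.
    case: (eqVneq B0 T) => [->|_] /=; [by rewrite (negbTE T0) andbF | by rewrite andbT].
  have tle : (#|T| < #|N|)%N.
    apply: proper_card; rewrite properE; apply/andP; split.
      exact: subset_trans TN (subD1set _ _).
    by apply/subsetP => /(_ i iN); rewrite (negbTE (Pi_notin hs Ts)).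
  have hsub : ((#|N| - #|T|)%:R : R) = #|N|%:R - #|T|%:R by rewrite natrB // ltnW.
  rewrite hsub => e.
  have ne : (#|N|%:R - #|T|%:R : R) != 0.
    by rewrite subr_eq0 eqr_nat neq_ltn tle orbT.
  rewrite -/(x T) in e.
  have : x T * (#|N|%:R - #|T|%:R) = #|T|%:R * (X - x T).
    by rewrite {1}e mulrAC divfK.
  move=> h; have -> : x T * #|N|%:R = x T * (#|N|%:R - #|T|%:R) + #|T|%:R * x T by ring.
  by rewrite h; ring.
have sumT : (\sum_(T in s) x T) * #|N|%:R = X * #|N :\ i|%:R.
  rewrite mulr_suml (eq_bigr _ key) -mulr_suml mulrC; congr (_ * _).
  by rewrite (card_partition hs') natr_sum.
have cN : #|N| = (#|N :\ i|).+1 by rewrite (cardsD1 i N) iN.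
have Xe : X = x set0 + \sum_(T in s) x T.
  by rewrite /X setUC big_setU1.
have x0 : x set0 * #|N|%:R = X.
  have : X * #|N|%:R = x set0 * #|N|%:R + X * #|N :\ i|%:R.
    by rewrite -sumT {1}Xe mulrDl.
  move=> h; rewrite cN -nat1r in h *.
  apply: (@etrans _ _ (X * (1 + #|N :\ i|%:R) - X * #|N :\ i|%:R)); last by ring.
  by rewrite h; ring.
have nN' : (#|N|%:R : R) != 0 by rewrite pnatr_eq0 -lt0n.
apply: (mulIf nN'); rewrite -/(x B) -/(x set0) key // -mulrA x0.
by [].
Qed.


Lemma ewens_neq0 N P : ewens R N P != 0.
Proof.
rewrite ewensE mulf_neq0 ?invr_eq0 ?fact_neq0 //.
by rewrite /prodE; apply/prodf_neq0 => B _; rewrite fact_neq0.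
Qed.

Lemma step1E N i s B : i \in N -> s \in Pi (N :\ i) -> B \in s ->
  ewens R N (plus_to s i B) = #|B|%:R * ewens R N (plus_to s i set0).
Proof.
move=> iN hs Bs.
rewrite !ewensE (prodE_plus hs) ?inE ?Bs // (prodE_plus hs) ?inE ?eqxx ?orbT //.
have B0 : B != set0.
  by apply: contraTneq Bs => ->; rewrite inPi in hs; rewrite (partition0 hs).
by rewrite /cB (negbTE B0) eqxx mul1r !mulrA.
Qed.

Lemma condC_ewens p : condC p -> (forall N, \sum_(P in Pi N) p N P = 1) ->
  forall N P, P \in Pi N -> p N P = ewens R N P.
Proof.
move=> hC hs N.
pose S0 := [set [set x] | x in N].
pose K := p N S0 / ewens R N S0.
suff hK : forall m Q, (#|N| - #|Q| < m)%N -> Q \in Pi N -> p N Q = K * ewens R N Q.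
  have K1 : K = 1.
    rewrite -(hs N) -[K]mulr1 -(sum_ewens N) mulr_sumr.
    by apply: eq_bigr => Q hQ; rewrite (hK _ Q (ltnSn _) hQ).
  by move=> P hP; rewrite (hK _ P (ltnSn _) hP) K1 mul1r.
elim=> // m IH Q hm hQ.
have hQ' := hQ; rewrite inPi in hQ'.
case: (boolP [exists C in Q, (1 < #|C|)%N]) => [/existsP[C /andP[CQ C1]]|hn].
  have /set0Pn[i iC] : C != set0 by rewrite -card_gt0; apply: ltnW.
  have iN : i \in N by apply: (subsetP (partitionS hQ' CQ)).
  have [h1 h2 h3] := unplusP iN hQ.
  have pC : pblock Q i = C by apply: def_pblock (partition_trivIset hQ') CQ iC.
  rewrite pC in h2 h3.
  have cC : #|C| = (#|C :\ i|).+1 by rewrite (cardsD1 i C) iC.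
  have B0 : C :\ i != set0 by rewrite -card_gt0 -ltnS -cC.
  have Bs : C :\ i \in unplus Q i by move: h2; rewrite !inE (negbTE B0) orbF.
  set s := unplus Q i in h1 h2 h3 Bs.
  have hQ2 : plus_to s i set0 \in Pi N by apply: Pi_plus iN h1 _; rewrite !inE eqxx orbT.
  have iB : i \notin C :\ i by rewrite !inE eqxx.
  have c1 : #|Q| = #|s|.
    have nX : (C :\ i :|: [set i]) \notin s :\ (C :\ i).
      by apply/negP => /setD1P[_] /(Pi_notin h1); rewrite !inE eqxx orbT.
    by rewrite -h3 /plus_to (negbTE B0) setUC cardsU1 (cardsD1 (C :\ i) s) Bs nX.
  have c2 : #|plus_to s i set0| = #|s|.+1.
    rewrite /plus_to eqxx setUC cardsU1.
    by have -> : [set i] \notin s by apply/negP => /(Pi_notin h1); rewrite inE eqxx.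
  have hle := card_le_Pi hQ2.
  have := IH (plus_to s i set0) _ hQ2.
  rewrite -h3 (step1 hC iN h1 Bs) (step1E iN h1 Bs) => -> //; first by rewrite mulrCA.
  move: hm hle; rewrite c1 c2; lia.

have hle : forall C, C \in Q -> (#|C| <= 1)%N.
  by move=> C CQ; move/existsPn: hn => /(_ C); rewrite CQ /= -leqNgt.
have -> : Q = S0.
  apply/setP => X; apply/idP/imsetP => [XQ|[x xN ->]].
    have : #|X| == 1%N.
      by rewrite eqn_leq hle // card_gt0 (partition_neq0 hQ' XQ).
    case/cards1P => x Xx; exists x => //.
    by apply: (subsetP (partitionS hQ' XQ)); rewrite Xx inE.
  have xc : x \in cover Q by rewrite (cover_partition hQ').
  have CQ := pblock_mem xc.
  have -> : [set x] = pblock Q x; last by [].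
  apply/eqP; rewrite eqEcard sub1set mem_pblock xc cards1 hle //.
by rewrite /K divfK // ewens_neq0.
Qed.
End RR.

Theorem proposition2 (R : realFieldType) (U : finType)
    (p : {set U} -> {set {set U}} -> R) (hp : is_random_partition p) :
  (null_player_property (pShapley p) <->
     (forall (N : {set U}) (P : {set {set U}}), P \in Pi N -> p N P = ewens R N P))
  /\
  ((forall (N : {set U}) (P : {set {set U}}), P \in Pi N -> p N P = ewens R N P) <->
     (forall (N : {set U}) (w : {set U} -> {set {set U}} -> R) (i : U),
        is_game N w -> i \in N -> pShapley p N w i = MPW N w i)).
Proof.
have hsum : forall N, \sum_(P in Pi N) p N P = 1 by move=> N; case: (hp N).
have partA : null_player_property (pShapley p) <->
    (forall N P, P \in Pi N -> p N P = ewens R N P).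
  split; first by move=> h; apply: condC_ewens (npp_condC h) hsum.
  exact: npp_of_ewens.
split => //; split.
  move=> hE N w i gw iN; rewrite (pShapley_ext w iN (hE N)).
  exact: shapley_mpw.
move=> hM; apply partA.1 => N w i gw iN nw.
rewrite hM // -shapley_mpw //.
by apply: (@npp_of_ewens R U (@ewens R U) (fun _ _ _ => erefl)).
Qed.
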